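(* Fix integers $q\ge2$, $L\ge1$, a real $r\in[0,\frac{L}{L+1})$ and a real $\varepsilon>0$. Then there is a function $\delta:\mathbb{N}\to\mathbb{R}$ with $\delta(n)\to0$ as $n\to\infty$ such that, for every $n$ with $rn\in\mathbb{N}$, if there exists an $(r,L)$ list-decodable code $C\subseteq[q]^n$ of rate at least $1-r-\varepsilon$ (i.e. $|C|\ge q^{(1-r-\varepsilon)n}$), then $L\ge \frac{r}{\varepsilon}+\delta(n)$.
   Context: $[q]=\{1,\dots,q\}$. A code is a subset $C\subseteq[q]^n$, of rate $\log_q(|C|)/n$. $B_t(v)$ is the Hamming ball of radius $t$ around $v\in[q]^n$. $C$ is $(r,L)$ list-decodable if $|B_{rn}(v)\cap C|\le L$ for all $v\in[q]^n$. *)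

(* Defs.v *)
From HB Require Import structures.
From mathcomp Require Import all_boot all_order all_algebra.
From mathcomp Require Import all_classical all_reals all_analysis.
Set Implicit Arguments. Unset Strict Implicit. Unset Printing Implicit Defensive.
Import Order.TTheory GRing.Theory Num.Theory.
Local Open Scope ring_scope.

(* Words of length n over the alphabet [q] = {1..q}, represented by 'I_q. *)
Definition word (q n : nat) := {ffun 'I_n -> 'I_q}.

Definition hamming (q n : nat) (u v : word q n) : nat :=
  #|[set i : 'I_n | u i != v i]|.

Definition hball (R : realType) (q n : nat) (t : R) (v : word q n) : {set word q n} :=
  [set u : word q n | (hamming v u)%:R <= t].

Definition list_decodable (R : realType) (q n : nat) (r : R) (L : nat)
  (C : {set word q n}) : Prop :=
  forall v : word q n, (#|hball (r * n%:R) v :&: C| <= L)%N.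

(* Main.v *)
Set Warnings "-all".
Require Import Defs.
From HB Require Import structures.
From mathcomp Require Import all_boot all_order all_algebra.
From mathcomp Require Import all_classical all_reals all_analysis.
From mathcomp Require Import zify ring lra.
Import Order.TTheory GRing.Theory Num.Theory.
Import numFieldNormedType.Exports.
Local Open Scope classical_set_scope.
Local Open Scope ring_scope.


Local Close Scope classical_set_scope.
Local Open Scope nat_scope.
Lemma blocksum (a m j : nat) :
  \sum_(0 <= i < a * m) (i %/ m != j : nat) = (a - (j < a)) * m.
Proof.
have [->|mpos] := posnP m; first by rewrite !muln0 big_geq.
elim: a => [|a IH]; first by rewrite mul0n big_geq.
rewrite mulSn addnC (big_cat_nat _ (n := a * m)) //=; last by lia.
rewrite IH.
rewrite (eq_big_nat _ _ (F2 := fun _ => (a != j : nat))); last first.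
  move=> i /andP [h1 h2]. congr (nat_of_bool (_ != _)).
  have -> : i = a * m + (i - a * m) by lia.
  rewrite divnMDl // divn_small //; lia.
rewrite sum_nat_const_nat.
have -> : (a * m + m - a * m) = m by lia.
case: (ltngtP j a) => h /=.
- rewrite (_ : j < a.+1); last by lia. case: a h {IH} => [|b] h //. rewrite !subn1 /= muln1 mulSn addnC //.
- rewrite (_ : j < a.+1 = false); last by apply/negbTE; lia. rewrite muln1 !subn0 mulSn addnC //.
- by rewrite h ltnSn muln0 addn0 subn1 subn0.
Qed.

Lemma card_block (n t m L : nat) (j : nat) :
  t = L.+1 * m -> (t <= n)%N -> (j < L.+1)%N ->
  (#|[set i : 'I_n | (i < t) && (i %/ m != j)]| <= L * m)%N.
Proof.
move=> ht htn hj.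
rewrite -sum1_card big_mkcond /=.
rewrite (eq_bigr (fun i : 'I_n => ((i < t) && (i %/ m != j) : nat))); last first.
  by move=> i _; rewrite inE; case: (_ && _).
rewrite -(big_mkord xpredT (fun i => ((i < t) && (i %/ m != j) : nat))).
rewrite (big_cat_nat _ (n := t)) //=.
rewrite [X in (_ + X)%N]big1_seq; last first.
  move=> i /andP [_]; rewrite mem_iota => /andP [h1 _].
  by rewrite ltnNge h1.
rewrite addn0 (eq_big_nat _ _ (F2 := fun i => (i %/ m != j : nat))); last first.
  by move=> i /andP [_ ->].
by rewrite ht blocksum hj subn1.
Qed.

Lemma comb_bound (q n L k m : nat) (C : {set word q n}) :
  (L.+1 * m <= n)%N -> (L * m <= k)%N ->
  (forall v : word q n, #|[set u in C | (hamming v u <= k)%N]%SET| <= L)%N ->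
  (#|C| <= L * q ^ (n - L.+1 * m))%N.
Proof.
set t := L.+1 * m => htn hLk hdec.
have hlt : forall j : 'I_(n - t), (t + j < n)%N.
  by move=> j; have := ltn_ord j; lia.
pose sh (j : 'I_(n - t)) : 'I_n := Ordinal (hlt j).
pose p (u : word q n) : {ffun 'I_(n - t) -> 'I_q} := [ffun j => u (sh j)].
rewrite leqNgt; apply/negP => hgt.
have [y hy] : exists y, (L < #|[set u in C | p u == y]|)%N.
  apply/existsP; rewrite -[X in is_true X]negbK; apply/negP => /existsPn hall.
  move: hgt; apply/negP; rewrite -leqNgt.
  rewrite -sum1_card (partition_big p xpredT) //=.
  rewrite (_ : (q ^ (n - t))%N = #|{ffun 'I_(n - t) -> 'I_q}|); last by rewrite card_ffun !card_ord.
  rewrite mulnC -sum_nat_const leq_sum // => z _.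
  by rewrite sum1_card; move: (hall z); rewrite -leqNgt; apply: leq_trans; apply: subset_leq_card; apply/fintype.subsetP => u; rewrite !inE.
set S := [set u in C | p u == y] in hy.
pose c (j : 'I_L.+1) : word q n := enum_val (widen_ord hy j).
have cS : forall j, c j \in S by move=> j; exact: enum_valP.
have cinj : injective c.
  by move=> j1 j2 /enum_val_inj /(congr1 val) /= /val_inj.
pose v : word q n := [ffun i : 'I_n => if (i < t)%N then c (inord (i %/ m)) i else c ord0 i].
have hv : forall j, (hamming v (c j) <= k)%N.
  move=> j; apply: leq_trans hLk.
  apply: leq_trans (@card_block n t m L j (erefl t) htn (ltn_ord j)).
  apply: subset_leq_card; apply/fintype.subsetP => i; rewrite !inE ffunE.
  case: ifP => hit /=.
    apply: contra_neqT; rewrite negbK => /eqP hij.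
    by rewrite (_ : inord (i %/ m) = j) //; apply: val_inj; rewrite /= inordK hij.
  have hi : (i - t < n - t)%N by have := ltn_ord i; move: hit; move/negbT; rewrite -leqNgt; lia.
  have := cS ord0; have := cS j; rewrite !inE => /andP [_ /eqP h1] /andP [_ /eqP h2].
  have := congr1 (fun f : {ffun 'I_(n - t) -> 'I_q} => f (Ordinal hi)) (etrans h2 (esym h1)).
  rewrite /= /p !ffunE (_ : sh (Ordinal hi) = i); first by move=> ->; rewrite eqxx.
  by apply: val_inj => /=; move: hit; move/negbT; rewrite -leqNgt; lia.
have := hdec v.
apply/negP; rewrite -ltnNge.
have -> : L = #|[set c j | j : 'I_L.+1]|.-1 by rewrite card_imset // card_ord.
rewrite prednK; last by rewrite card_imset // card_ord.
apply: subset_leq_card; apply/fintype.subsetP => u /imsetP [j _ ->].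
rewrite inE hv andbT; by have := cS j; rewrite inE => /andP [].
Qed.
Local Open Scope classical_set_scope.
Local Open Scope ring_scope.

Theorem proposition3p4 (R : realType) (q L : nat) (r eps : R) :
  (2 <= q)%N -> (1 <= L)%N ->
  0 <= r -> r < L%:R / (L%:R + 1) -> 0 < eps ->
  exists delta : nat -> R,
    delta @ \oo --> 0 /\
    forall n : nat, (exists k : nat, r * n%:R = k%:R) ->
      (exists C : {set word q n},
          list_decodable r L C /\
          q%:R `^ ((1 - r - eps) * n%:R) <= #|C|%:R) ->
      r / eps + delta n <= L%:R.
Proof.
move=> hq hL hr0 hrL heps.
have lq0 : 0 < ln (q%:R : R) by apply: ln_gt0; rewrite ltr1n.
have L0 : (0 : R) < L%:R by rewrite ltr0n.
set A := ln (L%:R : R) / ln (q%:R : R).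
have A0 : 0 <= A by rewrite divr_ge0 // ?ln_ge0 ?ler1n // ?ltW //; lia.
set s := r / eps.
have s0 : 0 <= s by rewrite divr_ge0 //; exact: ltW.
set K := L%:R * (A + L%:R + 1) / eps.
have K0 : 0 <= K by apply: divr_ge0; [apply: mulr_ge0|]; lra.
exists (fun n => harmonic n * (- (K + s))); split.
  by rewrite -(mul0r (- (K + s))); apply: cvgMr_tmp; exact: cvg_harmonic.
move=> n [k hk] [C [hdec hC]].
set m := (k %/ L)%N.
have hmk : (L * m <= k)%N by rewrite mulnC leq_trunc_div.
have hkm : (k <= L * m + L)%N.
  have := ltn_pmod k hL; rewrite {1}(divn_eq k L) /m; lia.
have hkn : (k * L.+1 <= L * n)%N.
  rewrite -(ler_nat R) !natrM -hk.
  have : r * (L%:R + 1) <= L%:R by rewrite -ler_pdivlMr ?ltW //; lra.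
  rewrite -natr1 => h.
  have n0 : (0 : R) <= n%:R by [].
  nra.
have htn : (L.+1 * m <= n)%N.
  rewrite -(leq_pmul2l hL).
  apply: leq_trans hkn.
  rewrite mulnCA [X in (_ <= X)%N]mulnC leq_pmul2l //.
have hdec' : forall v : word q n, (#|[set u in C | (hamming v u <= k)%N]%SET| <= L)%N.
  move=> v; have := hdec v; rewrite hk.
  suff -> : hball (k%:R : R) v :&: C = [set u in C | (hamming v u <= k)%N]%SET by [].
  by apply/finset.setP => u; rewrite !inE ler_nat andbC.
have hb := @comb_bound q n L k m C htn hmk hdec'.
set t := (L.+1 * m)%N in htn hb.
have hb' : q%:R `^ ((1 - r - eps) * n%:R) <= L%:R * q%:R `^ (n - t)%N%:R.
  apply: le_trans hC _; rewrite powR_mulrn ?ler0n // -natrX -natrM ler_nat //.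
have q0 : (0 : R) < q%:R by rewrite ltr0n; exact: ltnW hq.
have hp1 : 0 < q%:R `^ ((1 - r - eps) * n%:R) by apply: powR_gt0.
have hp2 : 0 < (q%:R : R) `^ (n - t)%N%:R by apply: powR_gt0.
move: hb'; rewrite -ler_ln ?posrE ?mulr_gt0 //.
rewrite (lnM (_ : L%:R \in Num.pos) (_ : _ \in Num.pos)) ?posrE // !ln_powR natrB //.
set lq := ln (q%:R : R); set N := (n%:R : R); set T := (t%:R : R) => h1.
have h2 : T - (r + eps) * N <= A.
  rewrite /A ler_pdivlMr //.
  have e : (T - (r + eps) * N) * lq = (1 - r - eps) * N * lq - (N - T) * lq by ring.
  rewrite e; lra.
have hT : T = (L%:R + 1) * m%:R by rewrite /T /t natrM -natr1.
have hkm' : k%:R <= L%:R * m%:R + (L%:R : R) by rewrite -natrM -natrD ler_nat.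
have p1 : L%:R * (T - (r + eps) * N) <= L%:R * A by rewrite ler_wpM2l // ltW.
have p2 : (L%:R + 1) * (k%:R - L%:R) <= (L%:R + 1) * (L%:R * m%:R) :> R.
  rewrite ler_wpM2l //; lra.
have h3 : r * N <= L%:R * eps * N + L%:R * (A + L%:R + 1).
  rewrite -hk in p2 hkm'. rewrite hT in p1. nra.
have hs : s * N <= L%:R * N + K.
  have e1 : s * N = (r * N) / eps by rewrite /s mulrAC.
  have e2 : L%:R * N + K = (L%:R * eps * N + L%:R * (A + L%:R + 1)) / eps.
    by rewrite /K mulrDl; congr (_ + _); field; rewrite gt_eqF.
  by rewrite e1 e2 ler_pM2r ?invr_gt0.
rewrite /=.
have N1 : (0 : R) < n.+1%:R by rewrite ltr0n.
rewrite -/s mulrN mulrC -/(_ / _) (_ : s - (K + s) / n.+1%:R <= L%:R = ((s - L%:R) * n.+1%:R <= K + s)); last first.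
  by rewrite lerBlDr -lerBlDl -ler_pdivlMr.
rewrite -natr1 -/N.
have e : (s - L%:R) * (N + 1) = (s * N - L%:R * N) + s - L%:R by ring.
rewrite e; lra.
Qed.
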